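(* In the setting below, if a correct process $i$ calls $\mathtt{get\_sink}(\mathit{PD}_i,f)$, it will eventually receive (learn) $V_{\mathit{sink}}$.
   Context: System: a finite set $\Pi$ of processes with unique identifiers communicating over authenticated reliable point-to-point channels in a partially synchronous system; $f\ge0$ is known; $W\subseteq\Pi$ are the correct processes, $F=\Pi\setminus W$ the Byzantine faulty ones with $|F|\le f$ (chosen statically). Each process $i$ is given $\mathit{PD}_i\subseteq\Pi$; the knowledge connectivity graph $G_{\mathit{di}}$ is the directed graph on $\Pi$ with edge $(i,j)$ iff $j\in\mathit{PD}_i$. A sink component is a strongly connected component of $G_{\mathit{di}}$ from which no path leads outside. A directed graph is $k$-OSR if (1) its underlying undirected graph is connected; (2) its condensation has exactly one sink $G_{\mathit{sink}}$; (3) $G_{\mathit{sink}}$ is $k$-strongly connected; (4) from every node outside $G_{\mathit{sink}}$ to every node in it there are at least $k$ node-disjoint directed paths. Standing assumption: deleting $F$ from $G_{\mathit{di}}$ yields an $(f+1)$-OSR graph, $G_{\mathit{di}}$ has a unique sink component with vertex set $V_{\mathit{sink}}$, and it contains at least $2f+1$ correct processes. Primitives from prior work (assumed): (i) a procedure $\mathtt{SINK}(\mathit{PD}_i,f)$ which, executed by any correct $i\in V_{\mathit{sink}}$, terminates and returns $\langle\mathit{true},V_{\mathit{sink}}\rangle$ (it may not terminate at non-sink members); (ii) a reachable-reliable broadcast with operations $\mathtt{reachable\_bcast}(m,i)$ and $\mathtt{reachable\_deliver}(m,i)$ such that if a correct process $i$ invokes $\mathtt{reachable\_bcast}(m,i)$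 then every correct process $f$-reachable from $i$ (i.e. joined to it by at least $f+1$ node-disjoint paths of correct processes in $G_{\mathit{di}}$) eventually delivers $m$ from $i$, only messages actually broadcast by $i$ are delivered as from $i$, and every correct sink member is $f$-reachable from every process. Algorithm $\mathtt{get\_sink}$ at process $i$: local variables $\mathit{sink}=\emptyset$, $\mathit{asked}=\emptyset$, and a collection $\mathit{values}$ of received values. When called: if $\mathit{sink}=\emptyset$, $i$ invokes $\mathtt{reachable\_bcast}(\mathtt{GET\_SINK},i)$, starts in parallel a task that waits until some value $v$ has been received (in $\mathit{values}$) more than $f$ times and then sets $\mathit{sink}\leftarrow v$, and runs $\mathtt{SINK}(\mathit{PD}_i,f)$; if that returns $\langle\mathit{true},V\rangle$ it sets $\mathit{sink}\leftarrow V$ and starts a task that forever: whenever some $j\in\mathit{asked}$ exists, sends $\langle\mathtt{SINK},\mathit{sink}\rangle$ to $j$ and removes $j$ from $\mathit{asked}$. Then $i$ waits until $\mathit{sink}\neq\emptyset$ and returns $\langle\mathit{true},\mathit{sink}\rangle$ if $i\in\mathit{sink}$, otherwise $\langle\mathit{false},\mathit{sink}\rangle$. Upon $\mathtt{reachable\_deliver}(\mathtt{GET\_SINK},j)$, $i$ adds $j$ to $\mathit{asked}$. Upon receiving $\langle\mathtt{SINK},V\rangle$, $i$ adds $V$ to $\mathit{values}$. *)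

(* Defs.v *)
From mathcomp Require Import all_boot.
Set Implicit Arguments. Unset Strict Implicit. Unset Printing Implicit Defensive.

Section Graphs.
Variable P : finType.

Definition Gdi (PD : P -> {set P}) : rel P := fun i j => j \in PD i.

Definition restrict (r : rel P) (A : {set P}) : rel P :=
  fun x y => [&& x \in A, y \in A & r x y].

Definition symr (r : rel P) : rel P := fun x y => r x y || r y x.

(* S is a sink component of the graph (vertex set A, edges r restricted to A):
   a nonempty strongly connected set of vertices from which no path leads out.
   (Such an S is exactly a strongly connected component that is a sink of the
   condensation.) *)
Definition sink_comp (r : rel P) (A S : {set P}) : Prop :=
  [/\ S != set0, S \subset A,
      (forall x y, x \in S -> y \in S -> connect r x y) &
      (forall x y, x \in S -> connect r x y -> y \in S)].

(* There are at least k node-disjoint directed paths from u to v in r.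
   Each path is given by its sequence p of internal vertices
   (u, p_1, ..., p_m, v); distinct paths share no internal vertex. *)
Definition disjoint_paths (r : rel P) (u v : P) (k : nat) : Prop :=
  exists ps : seq (seq P),
    [/\ k <= size ps, uniq ps,
        (forall p, p \in ps -> [/\ path r u (rcons p v), u \notin p & v \notin p]) &
        (forall p q, p \in ps -> q \in ps -> p != q -> forall x, x \in p -> x \notin q)].

Definition OSR (k : nat) (r : rel P) (A : {set P}) : Prop :=
  let rA := restrict r A in
  (forall x y, x \in A -> y \in A -> connect (symr rA) x y) /\
  exists Ssink : {set P},
    [/\ sink_comp rA A Ssink,
        (forall S, sink_comp rA A S -> S = Ssink),
        (forall u v, u \in Ssink -> v \in Ssink -> u != v ->
            disjoint_paths (restrict rA Ssink) u v k) &
        (forall u v, u \in A -> u \notin Ssink -> v \in Ssink ->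
            disjoint_paths rA u v k)].

Definition f_reachable (r : rel P) (W : {set P}) (f : nat) (i j : P) : Prop :=
  disjoint_paths (fun x y => r x y && (y \in W)) i j f.+1.

End Graphs.

(* For a process j:
   call j        = Some t0 iff j (first) invokes get_sink at time t0
   sinkv j t     = value of j's local variable sink at time t
   bcast j t     : j invokes reachable_bcast(GET_SINK, j) at time t
   deliver j k t : j executes reachable_deliver(GET_SINK, k) at time t
   send j k V t  : j sends <SINK, V> to k at time t
   recv j k V t  : j receives <SINK, V> from k at time t
   sink_start j t: j starts procedure SINK(PD_j, f) at time t
   sink_ret j t b V : SINK at j returns <b, V> at time t
   ret j t b V   : get_sink at j returns <b, V> at time t
   Nothing is constrained for Byzantine processes. *)
Record run (P : finType) := Run {
  call : P -> option nat;
  sinkv : P -> nat -> {set P};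
  bcast : P -> nat -> Prop;
  deliver : P -> P -> nat -> Prop;
  send : P -> P -> {set P} -> nat -> Prop;
  recv : P -> P -> {set P} -> nat -> Prop;
  sink_start : P -> nat -> Prop;
  sink_ret : P -> nat -> bool -> {set P} -> Prop;
  ret : P -> nat -> bool -> {set P} -> Prop }.

Section Specs.
Variables (P : finType) (R : run P) (W : {set P}) (f : nat).

(* (k, v) is in j's collection values at time t: received strictly before t. *)
Definition received (j k : P) (v : {set P}) (t : nat) : Prop :=
  exists s, s < t /\ recv R j k v s.

Definition supported (j : P) (v : {set P}) (t : nat) : Prop :=
  exists K : {set P}, f < #|K| /\ forall k, k \in K -> received j k v t.

(* Authenticated reliable point-to-point channels between correct processes. *)
Definition channels_spec : Prop :=
  (forall j k V t, j \in W -> k \in W -> send R j k V t ->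
     exists t', t <= t' /\ recv R k j V t') /\
  (forall j k V t, j \in W -> k \in W -> recv R j k V t ->
     exists s, s <= t /\ send R k j V s).

Definition rbcast_spec (r : rel P) : Prop :=
  (forall k t, k \in W -> bcast R k t ->
     forall j, j \in W -> f_reachable r W f k j -> exists t', deliver R j k t') /\
  (forall j k t, j \in W -> k \in W -> deliver R j k t ->
     exists s, s <= t /\ bcast R k s).

(* Procedure SINK from prior work. *)
Definition sink_spec (Vsink : {set P}) : Prop :=
  [/\ (forall j t, j \in W -> j \in Vsink -> sink_start R j t ->
         exists t', t <= t' /\ sink_ret R j t' true Vsink),
      (forall j t b V, j \in W -> j \in Vsink -> sink_ret R j t b V ->
         b = true /\ V = Vsink),
      (forall j t V, j \in W -> sink_ret R j t true V -> V = Vsink) &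
      (forall j t b V, j \in W -> sink_ret R j t b V ->
         exists s, s <= t /\ sink_start R j s)].

(* Behaviour of a correct process j running algorithm get_sink
   (with fair execution of its parallel tasks). *)
Definition algo_spec (j : P) : Prop :=
  (sinkv R j 0 = set0) /\
  (forall t0, call R j = Some t0 -> bcast R j t0 /\ sink_start R j t0) /\
  (forall t, bcast R j t -> call R j = Some t) /\
  (forall t, sink_start R j t -> call R j = Some t) /\
  (forall t V, sink_ret R j t true V -> sinkv R j t.+1 = V) /\
  (* sink only changes by one of the two assignments of the algorithm *)
  (forall t, sinkv R j t.+1 != sinkv R j t ->
     (exists t0, call R j = Some t0 /\ t0 <= t) /\
     (sink_ret R j t true (sinkv R j t.+1) \/
      supported j (sinkv R j t.+1) t.+1)) /\
  (* waiting task: once some value is received more than f times,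
     it eventually sets sink to such a value *)
  (forall t0 v t, call R j = Some t0 -> supported j v t ->
     exists t' v', maxn t0 t <= t' /\ supported j v' t'.+1 /\
                   sinkv R j t'.+1 = v') /\
  (* responder task: safety (answers only asked processes, with current sink,
     once SINK has returned <true, _>) *)
  (forall k V t, send R j k V t ->
     (exists t1 V1, t1 < t /\ sink_ret R j t1 true V1) /\
     (exists t2, t2 <= t /\ deliver R j k t2) /\
     V = sinkv R j t) /\
  (forall k t1 V1 t2, sink_ret R j t1 true V1 -> deliver R j k t2 ->
     exists t, t1 < t /\ t2 <= t /\ send R j k (sinkv R j t) t) /\
  (forall t b V, ret R j t b V ->
     (exists t0, call R j = Some t0 /\ t0 <= t) /\
     V = sinkv R j t /\ V != set0 /\ b = (j \in V)) /\
  (* return of get_sink: liveness (waits until sink <> empty) *)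
  (forall t0 t, call R j = Some t0 -> t0 <= t -> sinkv R j t != set0 ->
     exists t' b V, t <= t' /\ ret R j t' b V).

End Specs.

(* Main.v *)
Require Import Defs.
From mathcomp Require Import all_boot.
From mathcomp Require Import zify.

Lemma bound_all (T : eqType) (Q : T -> nat -> Prop) (s : seq T) :
  (forall x n m, n <= m -> Q x n -> Q x m) ->
  (forall x, x \in s -> exists n, Q x n) -> exists n, forall x, x \in s -> Q x n.
Proof.
move=> mono; elim: s => [|a s IH] H; first by exists 0.
have [n1 h1] := H a (mem_head _ _).
have [n2 h2] : exists n, forall x, x \in s -> Q x n.
  by apply: IH => x xs; apply: H; rewrite inE xs orbT.
exists (maxn n1 n2) => x; rewrite inE => /orP[/eqP->|xs].
  by apply: mono h1; apply: leq_maxl.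
by apply: mono (h2 x xs); apply: leq_maxr.
Qed.

Theorem theorem6 (P : finType) (PD : P -> {set P}) (f : nat) (F : {set P})
  (Vsink : {set P}) (R : run P) (i : P) (t0 : nat) :
  (* Byzantine processes, at most f of them; W = correct processes *)
  #|F| <= f ->
  (* standing assumption *)
  OSR f.+1 (Gdi PD) (~: F) ->
  sink_comp (Gdi PD) setT Vsink ->
  (forall S, sink_comp (Gdi PD) setT S -> S = Vsink) ->
  2 * f + 1 <= #|Vsink :&: ~: F| ->
  (* every correct sink member is f-reachable from every process *)
  (forall p j, j \in Vsink -> j \in ~: F -> f_reachable (Gdi PD) (~: F) f p j) ->
  (* primitives and channels *)
  sink_spec R (~: F) Vsink ->
  rbcast_spec R (~: F) f (Gdi PD) ->
  channels_spec R (~: F) ->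
  (* correct processes run get_sink *)
  (forall j, j \in ~: F -> algo_spec R f j) ->
  (* correct sink members invoke get_sink *)
  (forall j, j \in ~: F -> j \in Vsink -> exists s, call R j = Some s) ->
  (* the correct process i calls get_sink *)
  i \in ~: F -> call R i = Some t0 ->
  exists t b, ret R i t b Vsink.
Proof.
move=> hF _ _ _ hcard hreach [S1 S2 S3 S4] [B1 B2] [C1 C2] halg hcall hi hci.
have supp : forall t, (forall t', t' <= t -> forall j, j \in ~:F -> forall s, s <= t' ->
     sinkv R j s = Vsink -> sinkv R j t' = Vsink) ->
   forall j v, j \in ~:F -> supported R f j v t.+1 -> v = Vsink.
  move=> t IH j v hj [K [hK hrec]].
  have [k hkK hkF] : exists2 k, k \in K & k \in ~: F.
    case: (boolP [exists k in K, k \in ~: F]) => [/exists_inP [k ? ?]|/exists_inP hno].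
      by exists k.
    exfalso.
    have : K \subset F.
      apply/subsetP => x xK; case: (boolP (x \in F)) => // xF.
      by exfalso; apply: hno; exists x => //; rewrite inE xF.
    move/subset_leq_card => h; have := leq_trans h hF; lia.
  have [s0 [hs0 hr]] := hrec k hkK.
  have [s' [hs' hsend]] := C2 j k v s0 hj hkF hr.
  have [_ [_ [_ [_ [Aret [_ [_ [Asend _]]]]]]]] := halg k hkF.
  have [[t1 [V1 [ht1 hret]]] [_ ->]] := Asend j v s' hsend.
  have V1E := S3 k t1 V1 hkF hret.
  apply: (IH s' _ k hkF t1.+1); first by lia.
    by [].
  by rewrite (Aret _ _ hret).
have inv : forall t t', t' <= t -> forall j, j \in ~:F ->
   (sinkv R j t' = set0 \/ sinkv R j t' = Vsink) /\
   (forall s, s <= t' -> sinkv R j s = Vsink -> sinkv R j t' = Vsink).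
  elim=> [|t IH].
    move=> t'; rewrite leqn0 => /eqP -> j hj.
    have [A0 _] := halg j hj.
    split; first by left.
    by move=> s; rewrite leqn0 => /eqP ->.
  move=> t'; rewrite leq_eqVlt ltnS => /orP[/eqP->|]; last exact: IH.
  move=> j hj.
  case: (eqVneq (sinkv R j t.+1) (sinkv R j t)) => [E|N].
    have [h1 h2] := IH t (leqnn t) j hj.
    rewrite E; split => // s hs hsv.
    move: hs; rewrite leq_eqVlt ltnS => /orP[/eqP Es|hs].
      by subst s; rewrite -E.
    exact: (h2 s hs hsv).
  have [_ [_ [_ [_ [_ [Achg _]]]]]] := halg j hj.
  have E : sinkv R j t.+1 = Vsink.
    have [_ [hr|hs]] := Achg t N; first exact: (S3 j t _ hj hr).
    apply: (supp t) hs => //.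
    by move=> t'' ht'' j' hj'; exact: (IH t'' ht'' j' hj').2.
  by split; [right | move=> *].
have [_ [Acall _]] := halg i hi.
have [hbi _] := Acall t0 hci.
set K := Vsink :&: ~: F.
have recvall : forall k, k \in enum K -> exists n, received R i k Vsink n.
  move=> k; rewrite mem_enum inE => /andP[kV kF].
  have [t2 dl] := B1 i t0 hi hbi k kF (hreach i k kV kF).
  have [s hs] := hcall k kF kV.
  have [_ [Acallk [_ [_ [Aret [_ [_ [_ [Alive _]]]]]]]]] := halg k kF.
  have [_ hss] := Acallk s hs.
  have [t1 [_ hret]] := S1 k s kF kV hss.
  have [t [ht1 [_ hsend]]] := Alive i t1 Vsink t2 hret dl.
  have Esk : sinkv R k t = Vsink.
    by apply: ((inv t t (leqnn t) k kF).2 t1.+1 ht1); rewrite (Aret _ _ hret).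
  have [t' [_ hrc]] := C1 k i _ t kF hi hsend.
  by exists t'.+1; exists t'; split => //; rewrite -Esk.
have mono : forall x n m, n <= m -> received R i x Vsink n -> received R i x Vsink m.
  move=> x n m nm [s [hs hr]]; exists s; split => //; exact: leq_trans hs nm.
have [T hT] := @bound_all _ (fun k n => received R i k Vsink n) _ mono recvall.
have hsup : supported R f i Vsink T.
  exists K; split; first by rewrite /K; lia.
  by move=> k hk; apply: hT; rewrite mem_enum.
have [_ [_ [_ [_ [_ [_ [Await [_ [_ [Rsafe Rlive]]]]]]]]]] := halg i hi.
have [t' [v' [ht' [hs' Ev']]]] := Await t0 Vsink T hci hsup.
have v'E : v' = Vsink.
  apply: (supp t') hs' => //.
  by move=> t'' ht'' j' hj'; exact: (inv t' t'' ht'' j' hj').2.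
have Vne : Vsink != set0.
  by apply/eqP => E; move: hcard; rewrite /K E set0I cards0; lia.
have [t'' [b [V [_ hret]]]] := Rlive t0 t'.+1 hci (ltac:(lia)) (ltac:(by rewrite Ev' v'E)).
have [_ [EV [Vn _]]] := Rsafe t'' b V hret.
exists t'', b.
have [h|h] := (inv t'' t'' (leqnn _) i hi).1.
  by move: Vn; rewrite EV h eqxx.
by rewrite -h -EV.
Qed.
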